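(* For integers $k,l\ge 0$ define \[A(k,l)=\{(x_1,\dots,x_k)\in\mathbb{Z}^k:1\le x_1<\cdots<x_k,\ x_1+\cdots+x_k=l\},\] \[B(k,l)=\{(x_1,\dots,x_k)\in\mathbb{Z}^k:0\le x_1<\cdots<x_k,\ x_1+\cdots+x_k=l\}.\] Then for every integer $n\ge0$, \[p(n)=\sum_{0\le k\le l\le n}|A(k,l)|\,|B(k,n-l)|=\sum_{0\le k\le l\le n}|B(k,l-k)|\,|B(k,n-l)|,\] where $p(n)$ is the number of partitions of $n$.
   Context: For $k=0$ the sets $A(0,l)$ and $B(0,l)$ consist of the empty tuple if $l=0$ and are empty otherwise. $p(0)=1$. *)

(* Defs.v *)
From mathcomp Require Import all_boot.
Set Implicit Arguments. Unset Strict Implicit. Unset Printing Implicit Defensive.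

Definition inA (k l : nat) (s : seq nat) : bool :=
  [&& size s == k, sorted ltn s, all (fun x => 0 < x) s & sumn s == l].
Definition inB (k l : nat) (s : seq nat) : bool :=
  [&& size s == k, sorted ltn s & sumn s == l].

(* Every element of A(k,l) or B(k,l) is a nonnegative integer <= l (entries are
   >= 0 and sum to l), so these sets are exactly enumerated by k-tuples with
   entries in 'I_(l.+1). *)
Definition cardA (k l : nat) : nat := #|[set t : k.-tuple 'I_l.+1 | inA k l (map val t)]|.
Definition cardB (k l : nat) : nat := #|[set t : k.-tuple 'I_l.+1 | inB k l (map val t)]|.

Definition is_partition (n : nat) (s : seq nat) : bool :=
  [&& sorted geq s, all (fun x => 0 < x) s & sumn s == n].

(* p(n): a partition of n has at most n parts, each <= n; count partitions with
   k parts for each k <= n. *)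
Definition npart (n : nat) : nat :=
  \sum_(k < n.+1) #|[set t : k.-tuple 'I_n.+1 | is_partition n (map val t)]|.

(* Main.v *)
Require Import Defs.
From mathcomp Require Import all_boot zify.
Set Implicit Arguments. Unset Strict Implicit. Unset Printing Implicit Defensive.

Lemma count_bij (T1 T2 : eqType) (P1 : pred T1) (P2 : pred T2) (U1 : seq T1) (U2 : seq T2)
  (f : T1 -> T2) (g : T2 -> T1) :
  uniq U1 -> uniq U2 -> (forall x, P1 x -> x \in U1) -> (forall y, P2 y -> y \in U2) ->
  (forall x, P1 x -> P2 (f x) /\ g (f x) = x) -> (forall y, P2 y -> P1 (g y) /\ f (g y) = y) ->
  count P1 U1 = count P2 U2.
Proof.
move=> u1 u2 c1 c2 fg gf.
rewrite -!size_filter -(size_map f).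
apply: perm_size; apply: uniq_perm.
- rewrite map_inj_in_uniq ?filter_uniq //.
  move=> x y; rewrite !mem_filter => /andP[px _] /andP[py _] e.
  by rewrite -(fg x px).2 e (fg y py).2.
- by rewrite filter_uniq.
move=> y; apply/mapP/idP.
- case=> x; rewrite !mem_filter => /andP[px _] ->.
  by rewrite (fg x px).1 c2 ?(fg x px).1.
rewrite mem_filter => /andP[py _]; exists (g y); last by rewrite (gf y py).2.
by rewrite mem_filter (gf y py).1 c1 ?(gf y py).1.
Qed.

Lemma count_univ (T : eqType) (P : pred T) U V : uniq U -> uniq V ->
  (forall x, P x -> x \in U) -> (forall x, P x -> x \in V) -> count P U = count P V.
Proof. by move=> uU uV cU cV; apply: (@count_bij _ _ P P U V id id). Qed.

Lemma mem_tup k b (s : seq nat) :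
  (s \in [seq map val (val t) | t : k.-tuple 'I_b <- enum {: k.-tuple 'I_b}]) = (size s == k) && all (fun x => x < b) s.
Proof.
apply/mapP/idP.
- case=> t _ ->; rewrite size_map size_tuple eqxx /=.
  by apply/allP => x /mapP[y _ ->].
case/andP=> /eqP sk ab.
have sz : size (pmap insub s : seq 'I_b) == k.
  by rewrite size_pmap_sub -sk -all_count.
exists (Tuple sz); first by rewrite mem_enum.
rewrite /= (pmap_filter (insubK _)); apply/esym/all_filterP.
by apply: sub_all ab => x xb; rewrite insubT.
Qed.

Lemma uniq_tup k b : uniq ([seq map val (val t) | t : k.-tuple 'I_b <- enum {: k.-tuple 'I_b}]).
Proof.
rewrite map_inj_uniq ?enum_uniq // => t1 t2 e.
by apply: val_inj; apply: (inj_map val_inj).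
Qed.

Lemma card_tup k b (P : pred (seq nat)) U : uniq U ->
  (forall s, P s -> size s == k -> all (fun x => x < b) s /\ s \in U) ->
  #|[set t : k.-tuple 'I_b | P (map val t)]| = count (fun s => P s && (size s == k)) U.
Proof.
move=> uU H.
transitivity (count (fun t : k.-tuple 'I_b => P (map val t)) (enum {: k.-tuple 'I_b})).
  by rewrite cardsE cardE -size_filter enumT.
rewrite -(count_map (fun t : k.-tuple 'I_b => map val (val t)) P).
rewrite (eq_in_count (a2 := fun s => P s && (size s == k))); last first.
  by move=> s; rewrite mem_tup => /andP[/eqP ->]; rewrite eqxx andbT.
apply: count_univ => //; first exact: uniq_tup.
- by move=> s /andP[ps sk]; rewrite mem_tup sk (H s ps sk).1.
by move=> s /andP[ps sk]; exact: (H s ps sk).2.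
Qed.


Lemma count_sum (T : Type) m (P : 'I_m -> pred T) (Q : pred T) s :
  (forall x, \sum_(i < m) P i x = Q x) -> \sum_(i < m) count (P i) s = count Q s.
Proof.
move=> H; elim: s => [|x s IH] /=; first by rewrite big1.
by rewrite big_split /= IH H.
Qed.

Lemma sum_eq1 m (c : nat) (F : nat -> nat) : \sum_(k < m) (c == k :> nat) * F k = (c < m) * F c.
Proof.
elim: m => [|m IH]; first by rewrite big_ord0.
rewrite big_ord_recr /= IH ltnS.
by case: (ltngtP c m) => h //=; rewrite ?addn0 ?h.
Qed.

Lemma count_allpairs (T : eqType) (P Q : pred T) s t :
  count (fun p : T * T => P p.1 && Q p.2) [seq (x, y) | x <- s, y <- t] = count P s * count Q t.
Proof.
elim: s => [|x s IH] //=.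
rewrite count_cat IH count_map mulnDl; congr (_ + _).
rewrite (eq_count (a2 := fun y => P x && Q y)) //.
by case: (P x); [rewrite mul1n | rewrite mul0n; clear IH; elim: t].
Qed.

Definition W n : seq (seq nat) :=
  undup [seq s | k <- iota 0 n.+1, s <- [seq map val (val t) | t : k.-tuple 'I_n.+1 <- enum {: k.-tuple 'I_n.+1}]].

Lemma memW n s : size s <= n -> all (fun x => x <= n) s -> s \in W n.
Proof.
move=> ss as_; rewrite mem_undup; apply/allpairsPdep; exists (size s), s; split => //.
  by rewrite mem_iota.
by rewrite mem_tup eqxx.
Qed.

Lemma uniqW n : uniq (W n). Proof. exact: undup_uniq. Qed.

Lemma le_sumn s x : x \in s -> x <= sumn s.
Proof.
elim: s => [|y s IH] //=; rewrite inE => /orP[/eqP ->|/IH]; first exact: leq_addr.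
by move=> h; apply: (leq_trans h); exact: leq_addl.
Qed.

Lemma size_sumn s : all (fun x => 0 < x) s -> size s <= sumn s.
Proof. by elim: s => //= x s IH /andP[x0 /IH h]; rewrite -add1n leq_add. Qed.

Lemma all_le_sumn s : all (fun x => x <= sumn s) s.
Proof. by apply/allP => x; exact: le_sumn. Qed.


Fixpoint F (a b : seq nat) : seq nat :=
  match a, b with
  | x :: a', y :: b' => let mu := F a' b' in x :: map succn (mu ++ nseq (y - size mu) 0)
  | _, _ => [::]
  end.

Fixpoint G (fuel : nat) (l : seq nat) : seq nat * seq nat :=
  match fuel, l with
  | fuel'.+1, x :: r => let p := G fuel' [seq z.-1 | z <- r & 1 < z] in (x :: p.1, size r :: p.2)
  | _, _ => ([::], [::])
  end.

Definition DV (a b : seq nat) :=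
  [&& size a == size b, sorted gtn a, all (fun x => 0 < x) a & sorted gtn b].

Definition part (s : seq nat) := sorted geq s && all (fun x => 0 < x) s.

Lemma sorted_succ s : sorted geq (map succn s) = sorted geq s.
Proof. by rewrite sorted_map. Qed.

Lemma path_nseq0 c m : path geq c (nseq m 0).
Proof. by elim: m c => //= m IH c; rewrite IH andbT. Qed.

Lemma sorted_pad s m : sorted geq s -> sorted geq (s ++ nseq m 0).
Proof.
case: s => [_|h t]; first by case: m => //= m; exact: path_nseq0.
by rewrite /= cat_path => ->; rewrite path_nseq0.
Qed.

Lemma sumn_map_succ s : sumn (map succn s) = sumn s + size s.
Proof. by elim: s => //= x s ->; rewrite addnS addSn addnA. Qed.

Lemma F_inv a b : DV a b ->
  [/\ sumn (F a b) = sumn a + sumn b, part (F a b),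
      size (F a b) = (if b is y :: _ then y.+1 else 0) & head 0 (F a b) = head 0 a].
Proof.
elim: a b => [|x a IH] [|y b] //=.
rewrite /DV /= => /and4P[/eqP [sab] pa /andP[x0 aa] pb].
have dv : DV a b by rewrite /DV sab eqxx (path_sorted pa) aa (path_sorted pb).
case: (IH b dv) => su pt sz hd.
set mu := F a b in su pt sz hd *.
have ymu : size mu <= y.
  by rewrite sz; move: pb; case: (b) => //= y' b' /andP[].
split.
- rewrite sumn_map_succ sumn_cat sumn_nseq size_cat size_nseq subnKC // su; lia.
- rewrite /part /= all_map x0 /=.
  apply/andP; split; last by apply/allP.
  have sl : sorted geq [seq i.+1 | i <- mu ++ nseq (y - size mu) 0].
    by rewrite sorted_succ; apply: sorted_pad; case/andP: pt.
  move: sl; case E: [seq i.+1 | i <- mu ++ nseq (y - size mu) 0] => [//|h t] /= ->.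
  rewrite andbT; move: E; case: (mu) hd => [|m mu'] /=.
    by case: (y - 0) => //= n _ [<- _].
  move=> hm [<- _]; rewrite hm; move: pa; by case: (a) => //= a0 a' /andP[].
- by rewrite size_map size_cat size_nseq subnKC.
- by [].
Qed.


Definition mu_of (r : seq nat) := [seq z.-1 | z <- r & 1 < z].

Lemma DV_tail x a y b : DV (x :: a) (y :: b) -> DV a b.
Proof.
rewrite /DV /= => /and4P[/eqP [sab] pa /andP[x0 aa] pb].
by rewrite sab eqxx (path_sorted pa) aa (path_sorted pb).
Qed.

Lemma DV_size x a y b : DV (x :: a) (y :: b) -> size (F a b) <= y.
Proof.
move=> dv; have [_ _ sz _] := F_inv (DV_tail dv).
move: dv; rewrite /DV sz /= => /and4P[_ _ _]; by case: (b) => //= y' b' /andP[].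
Qed.

Lemma part_cons x r : part (x :: r) -> part r /\ all (fun z => z <= x) r.
Proof.
rewrite /part /= => /andP[pr /andP[_ ar]]; rewrite (path_sorted pr) ar; split => //.
have := order_path_min _ pr; apply.
by move=> u v w h1 h2; apply: leq_trans h2 h1.
Qed.

Lemma part_mu r : part r -> part (mu_of r).
Proof.
case/andP=> sr _; apply/andP; split.
  rewrite /mu_of sorted_map; apply: (@sub_sorted _ geq); last first.
    apply: sorted_filter => //; by move=> u v w h1 h2; apply: leq_trans h2 h1.
  by move=> u v /= h; lia.
rewrite /mu_of all_map; apply/allP => z; rewrite mem_filter /= => /andP[h _]; lia.
Qed.

Lemma size_mu r : size (mu_of r) <= size r.
Proof. by rewrite size_map size_filter count_size. Qed.

Lemma sumn_mu r : all (fun x => 0 < x) r -> sumn r = size r + sumn (mu_of r).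
Proof.
rewrite /mu_of; elim: r => //= z r IH /andP[z0 /IH ->].
case: ltnP => h /=; lia.
Qed.

Lemma all_mu_lt x r : all (fun z => z <= x) r -> all (fun z => z < x) (mu_of r).
Proof.
move/allP=> h; rewrite /mu_of all_map; apply/allP => z; rewrite mem_filter => /andP[z1 /h]; simpl in *; lia.
Qed.

Lemma pad_mu r : part r -> map succn (mu_of r ++ nseq (size r - size (mu_of r)) 0) = r.
Proof.
rewrite /mu_of; elim: r => //= z r IH pr.
have [pr' ar] := part_cons pr.
case: ltnP => h /=.
  rewrite (IH pr'); congr (_ :: _); lia.
have z1 : z = 1 by move: pr; rewrite /part /= => /and3P[_ ? _]; lia.
have r1 : all (fun u => u == 1) r.
  apply/allP => u ur; move/allP: ar => /(_ u ur); move: pr'; rewrite /part => /andP[_ /allP /(_ u ur)].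
  rewrite z1; lia.
have -> : [seq z0 <- r | 1 < z0] = [::].
  by apply/eqP; rewrite -size_eq0 size_filter -leqn0 leqNgt -has_count; apply/hasP => -[u /(allP r1) /eqP ->].
rewrite subn0 /= z1 map_nseq; congr (_ :: _).
by elim: r r1 {IH pr pr' ar} => //= u r IH /andP[/eqP -> /IH ->].
Qed.

Lemma mu_F s m : all (fun x => 0 < x) s -> mu_of (map succn (s ++ nseq m 0)) = s.
Proof.
rewrite /mu_of; elim: s => [_|u s IH /andP[u0 h]] /=.
  by elim: m.
by rewrite ltnS u0 /= IH.
Qed.

Lemma G_inv fuel l : part l -> size l <= fuel ->
  let p := G fuel l in [/\ DV p.1 p.2, sumn p.1 + sumn p.2 = sumn l & F p.1 p.2 = l].
Proof.
elim: fuel l => [|f IH] [|x r] //= pl sl.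
have [pr ar] := part_cons pl.
have pm := part_mu pr.
have sm : size (mu_of r) <= f by apply: leq_trans (size_mu r) sl.
have [dv su Fe] := IH _ pm sm.
rewrite -/(mu_of r).
set p := G f (mu_of r) in dv su Fe *.
split.
- have x0 : 0 < x by move: pl; rewrite /part /= => /and3P[].
  have hmu := all_mu_lt ar.
  have smr := size_mu r.
  move: dv hmu smr sm; rewrite /p; case: (mu_of r) => [|h t].
    by case: f {IH p su Fe sl} => [|f] /= _ _ _ _; rewrite /DV /= x0.
  case: f {IH p su Fe sl} => [|f] //= dv /andP[hx _] smr sm.
  move: dv; rewrite /DV /= => /and4P[/eqP [->] sa aa sb].
  by rewrite eqxx hx sa x0 aa /= sb andbT; lia.
- have := sumn_mu (proj2 (andP pr)); lia.
- 
 congr (_ :: _); rewrite -[RHS](pad_mu pr).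
  have e : F p.1 p.2 = mu_of r := Fe.
  by rewrite e.
Qed.

Lemma G_F a b fuel : DV a b -> size (F a b) <= fuel -> G fuel (F a b) = (a, b).
Proof.
elim: a b fuel => [|x a IH] [|y b] fuel //=; try by case: fuel.
move=> dv; have ys := DV_size dv; have dv' := DV_tail dv.
have [_ pt _ _] := F_inv dv'.
case: fuel => [|f] //; rewrite ltnS size_map size_cat size_nseq subnKC // => yf.
rewrite /= -/(mu_of _) mu_F; last by case/andP: pt.
rewrite IH //; last by apply: leq_trans ys yf.
by rewrite size_map size_cat size_nseq subnKC.
Qed.


Definition Valid n (p : seq nat * seq nat) :=
  [&& size p.2 == size p.1, sorted ltn p.1, all (fun x => 0 < x) p.1, sorted ltn p.2
    & sumn p.1 + sumn p.2 == n].

Definition ff (p : seq nat * seq nat) := F (rev p.1) (rev p.2).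
Definition gg (l : seq nat) := let q := G (size l) l in (rev q.1, rev q.2).

Lemma DV_rev a b : DV (rev a) (rev b) = [&& size b == size a, sorted ltn a, all (fun x => 0 < x) a & sorted ltn b].
Proof. by rewrite /DV !size_rev !rev_sorted all_rev eq_sym. Qed.

Lemma WW_uniq n : uniq [seq (x, y) | x <- W n, y <- W n].
Proof. by apply: allpairs_uniq; rewrite ?uniqW // => -[? ?] [? ?] _ _ /= ->. Qed.

Lemma main_bij n : count (Valid n) [seq (x, y) | x <- W n, y <- W n] = count (is_partition n) (W n).
Proof.
apply: (@count_bij _ _ _ _ _ _ ff gg (WW_uniq n) (uniqW n)).
- case=> a b /and5P[/eqP sba _ aa _ /eqP su].
  apply/allpairsPdep; exists a, b; split => //; apply: memW.
  + by apply: leq_trans (size_sumn aa) _; rewrite -su leq_addr.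
  + by apply/allP => x /le_sumn h; rewrite -su; apply: leq_trans h (leq_addr _ _).
  + by rewrite sba; apply: leq_trans (size_sumn aa) _; rewrite -su leq_addr.
  + by apply/allP => x /le_sumn h; rewrite -su; apply: leq_trans h (leq_addl _ _).
- move=> l /and3P[sl al /eqP su]; apply: memW.
  + by rewrite -su; apply: size_sumn.
  + by apply/allP => x /le_sumn h; rewrite -su.
- case=> a b /and5P[sba sa aa sb /eqP su].
  have dv : DV (rev a) (rev b) by rewrite DV_rev sba sa aa sb.
  have [s1 p1 _ _] := F_inv dv.
  split.
    by move: p1; rewrite /is_partition /ff /= s1 !sumn_rev su eqxx andbT.
  by rewrite /gg G_F //= !revK.
- move=> l /and3P[sl al /eqP su].
  have pl : part l by rewrite /part sl al.
  have [dv s1 fe] := G_inv pl (leqnn _).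
  have : DV (rev (rev (G (size l) l).1)) (rev (rev (G (size l) l).2)) by rewrite !revK.
  rewrite DV_rev => /and4P[a b c d].
  rewrite /Valid /gg /ff /= a b c d !sumn_rev s1 su eqxx !revK; split => //.
Qed.


Lemma cardA_W n k l : k <= n -> l <= n -> cardA k l = count (inA k l) (W n).
Proof.
move=> kn ln; rewrite /cardA (@card_tup k l.+1 (inA k l) (W n) (uniqW n)).
  by apply: eq_count => s; rewrite /inA; case: (size s == k); rewrite ?andbT ?andbF.
move=> s /and4P[_ _ _ /eqP su] /eqP sk; split.
  by apply/allP => x /le_sumn; rewrite su ltnS.
apply: memW; first by rewrite sk.
by apply/allP => x /le_sumn; rewrite su => h; apply: leq_trans h ln.
Qed.

Lemma cardB_W n k l : k <= n -> l <= n -> cardB k l = count (inB k l) (W n).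
Proof.
move=> kn ln; rewrite /cardB (@card_tup k l.+1 (inB k l) (W n) (uniqW n)).
  by apply: eq_count => s; rewrite /inB; case: (size s == k); rewrite ?andbT ?andbF.
move=> s /and3P[_ _ /eqP su] /eqP sk; split.
  by apply/allP => x /le_sumn; rewrite su ltnS.
apply: memW; first by rewrite sk.
by apply/allP => x /le_sumn; rewrite su => h; apply: leq_trans h ln.
Qed.

Lemma npart_W n : npart n = count (is_partition n) (W n).
Proof.
rewrite /npart.
rewrite (eq_bigr (fun k : 'I_n.+1 => count (fun s => is_partition n s && (size s == k)) (W n))); last first.
  move=> k _; rewrite (card_tup (U := W n)) ?uniqW //.
  move=> s /and3P[sl al /eqP su] /eqP sk; split.
    by apply/allP => x /le_sumn; rewrite su ltnS.
  apply: memW; first by rewrite -su; apply: size_sumn.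
  by apply/allP => x /le_sumn; rewrite su.
apply: count_sum => s.
rewrite (eq_bigr (fun k : 'I_n.+1 => (size s == k :> nat) * is_partition n s)); last first.
  by move=> k _; rewrite mulnb andbC.
rewrite (sum_eq1 n.+1 (size s) (fun _ => is_partition n s)).
case ps: (is_partition n s); rewrite ?muln0 // muln1 ltnS.
by case/and3P: ps => _ al /eqP su; rewrite -su (size_sumn al).
Qed.

Lemma term_eq n k l a b : l <= n ->
  (inA k l a && inB k (n - l) b) = (size a == k) && ((sumn a == l) && Valid n (a, b)).
Proof.
move=> ln; rewrite /inA /inB /Valid /=.
case: (eqVneq (size a) k) => [<-|ne] /=; last by [].
case: (eqVneq (sumn a) l) ln => [<-|ne] ln /=; last by rewrite !andbF.
have e : (sumn b == n - sumn a) = (sumn a + sumn b == n) by apply/eqP/eqP; lia.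
rewrite e !andbT.
by case: (sorted ltn a); case: (all _ a); case: (size b == _); case: (sorted ltn b).
Qed.

Lemma eq1 n : \sum_(l < n.+1) \sum_(k < l.+1) cardA k l * cardB k (n - l)
  = count (Valid n) [seq (x, y) | x <- W n, y <- W n].
Proof.
rewrite (eq_bigr (fun l : 'I_n.+1 => count (fun p => (sumn p.1 == l) && Valid n p) [seq (x, y) | x <- W n, y <- W n])).
  apply: count_sum => p.
  rewrite (eq_bigr (fun l : 'I_n.+1 => (sumn p.1 == l :> nat) * Valid n p)); last first.
    by move=> l _; rewrite mulnb.
  rewrite (sum_eq1 n.+1 (sumn p.1) (fun _ => Valid n p)).
  case V: (Valid n p); rewrite ?muln0 // muln1 ltnS.
  by case/and5P: V => _ _ _ _ /eqP <-; rewrite leq_addr.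
move=> l _; have ln : l <= n by rewrite -ltnS ltn_ord.
rewrite (eq_bigr (fun k : 'I_l.+1 => count (fun p : seq nat * seq nat => inA k l p.1 && inB k (n - l) p.2) [seq (x, y) | x <- W n, y <- W n])).
  apply: count_sum => -[a b].
  rewrite (eq_bigr (fun k : 'I_l.+1 => (size a == k :> nat) * ((sumn a == l) && Valid n (a, b)))); last first.
    by move=> k _; rewrite term_eq // mulnb.
  rewrite (sum_eq1 l.+1 (size a) (fun _ => (sumn a == l) && Valid n (a, b))).
  case V: ((sumn a == l) && Valid n (a, b)); rewrite ?muln0 // muln1 ltnS.
  by case/andP: V => /eqP <- /and5P[_ _ aa _ _]; rewrite (size_sumn aa).
move=> k _; have kl : k <= l by rewrite -ltnS ltn_ord.
rewrite count_allpairs (cardA_W (n := n)) ?(cardB_W (n := n)) //; try lia.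
Qed.

Lemma sorted_pred s : all (fun x => 0 < x) s -> sorted ltn s -> sorted ltn (map predn s).
Proof.
elim: s => //= x s IH /andP[x0 al]; rewrite path_sortedE; last exact: ltn_trans.
case/andP=> /allP h ss; rewrite path_sortedE; last exact: ltn_trans.
rewrite IH // andbT all_map; apply/allP => y ys /=; have := h y ys; simpl in *; lia.
Qed.

Lemma sumn_pred s : all (fun x => 0 < x) s -> sumn s = sumn (map predn s) + size s.
Proof. elim: s => //= x s IH /andP[x0 /IH ->]; lia. Qed.

Lemma mapSP s : all (fun x => 0 < x) s -> map succn (map predn s) = s.
Proof. elim: s => //= x s IH /andP[x0 /IH ->]; congr (_ :: _); lia. Qed.

Lemma mapPS s : map predn (map succn s) = s.
Proof. by elim: s => //= x s ->. Qed.

Lemma AB n k l : k <= l -> l <= n -> cardA k l = cardB k (l - k).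
Proof.
move=> kl ln; rewrite (cardA_W (n := n)) ?(cardB_W (n := n)); try lia.
apply: (@count_bij _ _ _ _ _ _ (map predn) (map succn) (uniqW n) (uniqW n)).
- move=> s /and4P[/eqP sk ss sa /eqP su]; apply: memW.
    by rewrite sk; lia.
  by apply/allP => x /le_sumn; rewrite su => h; lia.
- move=> s /and3P[/eqP sk ss /eqP su]; apply: memW.
    by rewrite sk; lia.
  by apply/allP => x /le_sumn; rewrite su => h; lia.
- move=> s /and4P[/eqP sk ss sa /eqP su]; split; last exact: mapSP.
  rewrite /inB size_map sk eqxx sorted_pred //=.
  by have := sumn_pred sa; rewrite su sk => ->; rewrite addnK.
- move=> s /and3P[/eqP sk ss /eqP su]; split; last exact: mapPS.
  rewrite /inA size_map sk eqxx sorted_map ss /= all_map sumn_map_succ su sk subnK //.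
  by rewrite eqxx andbT; apply/allP.
Qed.

Theorem lemma3p2 (n : nat) :
  npart n = \sum_(l < n.+1) \sum_(k < l.+1) cardA k l * cardB k (n - l)
  /\ npart n = \sum_(l < n.+1) \sum_(k < l.+1) cardB k (l - k) * cardB k (n - l).
Proof.
have h1 : npart n = \sum_(l < n.+1) \sum_(k < l.+1) cardA k l * cardB k (n - l).
  by rewrite eq1 npart_W main_bij.
split => //; rewrite h1; apply: eq_bigr => l _; apply: eq_bigr => k _.
by rewrite (AB (n := n)) // -ltnS ltn_ord.
Qed.
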